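(* Let $\mathcal{X}=(X_1,\ldots,X_r)$ be a directed path-decomposition of a digraph $G=(V,E)$. Let $A,B\subseteq V$ with $A\cap B=\emptyset$ and $\{(u,v),(v,u) : u\in A, v\in B\}\subseteq E$. If there is some $i$, $1\le i\le r$, with $A\subseteq X_i$, then there are $1\le i_1\le i_2\le r$ such that 1. $A\subseteq X_i$ for all $i$ with $i_1\le i\le i_2$, 2. $B\subseteq \bigcup_{i=i_1}^{i_2}X_i$, and 3. $(X'_{i_1},\ldots,X'_{i_2})$, where $X'_i=X_i\cap(A\cup B)$, is a directed path-decomposition of the subdigraph of $G$ induced by $A\cup B$.
   Context: Digraphs are finite, without loops or multiple arcs. A directed path-decomposition of a digraph $G=(V,E)$ is a sequence $(X_1,\ldots,X_r)$ of subsets of $V$ such that: (i) $X_1\cup\cdots\cup X_r=V$; (ii) for each $(u,v)\in E$ there are $i\le j$ with $u\in X_i$, $v\in X_j$; (iii) if $u\in X_i$ and $u\in X_j$ with $i\le j$, then $u\in X_\ell$ for all $i\le\ell\le j$. *)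

(* Defs.v *)
From mathcomp Require Import all_boot.
Set Implicit Arguments. Unset Strict Implicit. Unset Printing Implicit Defensive.

(* A digraph is given by a finite vertex type V, a vertex set W : {set V}
   and an arc relation E : rel V (only arcs between vertices of W count).
   A directed path-decomposition (X_1,...,X_r) is represented by the
   sequence X : seq {set V}; the bag X_i (1 <= i <= r) is nth set0 X (i-1),
   i.e. indices are 0-based in Rocq. *)

Definition bag (V : finType) (X : seq {set V}) (i : nat) : {set V} :=
  nth set0 X i.

Definition is_dpd (V : finType) (W : {set V}) (E : rel V) (X : seq {set V}) : Prop :=
  (\bigcup_(i < size X) bag X i = W) /\
  (forall u v, u \in W -> v \in W -> E u v ->
     exists i j, [/\ i <= j, j < size X, u \in bag X i & v \in bag X j]) /\
  (forall u i j l, i <= l <= j -> j < size X ->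
     u \in bag X i -> u \in bag X j -> u \in bag X l).

Definition restrict_bags (V : finType) (X : seq {set V}) (i1 i2 : nat) (S : {set V})
  : seq {set V} :=
  [seq bag X i :&: S | i <- iota i1 (i2 - i1).+1].

(* Main.v *)
Require Import Defs.
From mathcomp Require Import all_boot.
From mathcomp Require Import zify.

Ltac clean := repeat match goal with H : ?T |- _ =>
  lazymatch T with
  | is_true (leq _ _) => fail
  | is_true (andb (leq _ _) (leq _ _)) => fail
  | @eq nat _ _ => fail
  | _ => clear H
  end end.
Ltac mlia := clean; lia.

Theorem lemma3p7 (V : finType) (E : rel V) (X : seq {set V}) (A B : {set V}) :
  irreflexive E ->
  is_dpd [set: V] E X ->
  [disjoint A & B] ->
  (forall u v, u \in A -> v \in B -> E u v /\ E v u) ->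
  (exists i, i < size X /\ A \subset bag X i) ->
  exists i1 i2, [/\ i1 <= i2, i2 < size X,
    (forall i, i1 <= i <= i2 -> A \subset bag X i),
    B \subset \bigcup_(i < size X | i1 <= i <= i2) bag X i &
    is_dpd (A :|: B) E (restrict_bags X i1 i2 (A :|: B))].
Proof.
move=> _ [H1 [H2 H3]] _ HAB [i0 [Hi0 HA0]].
pose good i := (i < size X) && (A \subset bag X i).
have exg : exists i, good i by exists i0; rewrite /good Hi0 HA0.
have ubg : forall i, good i -> i <= size X by move=> i /andP[/ltnW].
case: (ex_minnP exg) => i1 /andP[Hi1 HA1] mini1.
case: (ex_maxnP exg ubg) => i2 /andP[Hi2 HA2] maxi2.
have g0 : good i0 by rewrite /good Hi0 HA0.
have Hi10 := mini1 _ g0.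
have Hi20 := maxi2 _ g0.
have HAin : forall i, i1 <= i <= i2 -> A \subset bag X i.
  move=> i /andP[h1 h2]; apply/subsetP => a Ha.
  apply: (H3 a i1 i2) => //; first by rewrite h1 h2.
    by move/subsetP: HA1; apply.
  by move/subsetP: HA2; apply.
have HBin : forall b, b \in B -> exists2 j, i1 <= j <= i2 & b \in bag X j.
  move=> b Hb.
  case: (boolP [exists j : 'I_(size X), (i1 <= j <= i2) && (b \in bag X j)]).
    by case/existsP => j /andP[hj hb]; exists j.
  move=> Hn.
  have Hn' : forall j, i1 <= j <= i2 -> b \notin bag X j.
    move=> j Hj; apply/negP => Hbj; move/negP: Hn; apply; apply/existsP.
    have hj : j < size X by mlia.
    by exists (Ordinal hj); rewrite /= Hj Hbj.
  have : b \in \bigcup_(i < size X) bag X i by rewrite H1 inE.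
  case/bigcupP => k _ Hbk.
  have hk := ltn_ord k.
  case: (ltnP k i1) => Hk1.
    have gp : good i1.-1.
      rewrite /good; apply/andP; split; first by mlia.
      apply/subsetP => a Ha.
      have [Eab _] := HAB a b Ha Hb.
      have [i [j [Hij Hj Hai Hbj]]] := H2 a b (in_setT a) (in_setT b) Eab.
      have Hji1 : j < i1.
        rewrite ltnNge; apply/negP => Hij1.
        case: (leqP j i2) => Hji2.
          by move: (Hn' j ltac:(mlia)); rewrite Hbj.
        have : b \in bag X i1 by apply: (H3 b k j) => //; mlia.
        by move: (Hn' i1 ltac:(mlia)) => /negP.
      apply: (H3 a i i1) => //; first by mlia.
      by move/subsetP: HA1; apply.
    have := mini1 _ gp; mlia.
  case: (leqP k i2) => Hk2.
    by move: (Hn' k ltac:(mlia)); rewrite Hbk.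
  have gp : good i2.+1.
    rewrite /good; apply/andP; split.
      apply: leq_ltn_trans hk; done.
    apply/subsetP => a Ha.
    have [_ Eba] := HAB a b Ha Hb.
    have [i [j [Hij Hj Hbi Haj]]] := H2 b a (in_setT b) (in_setT a) Eba.
    have Hii2 : i2 < i.
      rewrite ltnNge; apply/negP => Hii2.
      case: (leqP i1 i) => Hii1.
        by move: (Hn' i ltac:(mlia)); rewrite Hbi.
      have : b \in bag X i2 by apply: (H3 b i k) => //; mlia.
      by move: (Hn' i2 ltac:(mlia)) => /negP.
    apply: (H3 a i2 j) => //; first by mlia.
    by move/subsetP: HA2; apply.
  have := maxi2 _ gp; mlia.
pose c := fun i => maxn i1 (minn i i2).
have Hc1 : forall i, i1 <= c i <= i2 by move=> i; rewrite /c; mlia.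
have Hcm : forall i j, i <= j -> c i <= c j by move=> i j h; rewrite /c; mlia.
have Hclamp : forall w i m, i < size X -> i1 <= m <= i2 -> w \in bag X m ->
    w \in bag X i -> w \in bag X (c i).
  move=> w i m hi hm hwm hwi.
  case: (ltnP i i1) => h.
    have -> : c i = i1 by rewrite /c; mlia.
    apply: (H3 w i m) => //; mlia.
  case: (ltnP i2 i) => h'.
    have -> : c i = i2 by rewrite /c; mlia.
    apply: (H3 w m i) => //; mlia.
  by have -> : c i = i by rewrite /c; mlia.
exists i1, i2; split => //; first exact: leq_trans Hi10 Hi20.
- apply/subsetP => b Hb; case: (HBin b Hb) => j Hj Hbj; apply/bigcupP.
  have hj : j < size X by mlia.
  by exists (Ordinal hj).
set S := A :|: B.
set R := restrict_bags X i1 i2 S.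
have sizeR : size R = (i2 - i1).+1 by rewrite size_map size_iota.
have HR : forall k, k < (i2 - i1).+1 -> bag R k = bag X (i1 + k) :&: S.
  move=> k hk; rewrite /R /restrict_bags /bag (nth_map 0) ?size_iota //.
  by rewrite nth_iota.
have Hin : forall w, w \in S -> exists2 m, i1 <= m <= i2 & w \in bag X m.
  move=> w; rewrite in_setU => /orP[Hw|Hw]; last exact: HBin.
  exists i1; first by mlia.
  by move/subsetP: HA1; apply.
split; [|split].
- apply/setP => x; apply/bigcupP/idP.
    case=> k _; have hk : (k:nat) < (i2 - i1).+1 by rewrite -sizeR; exact: ltn_ord.
    by rewrite HR // inE => /andP[_ ->].
  move=> Hx; case: (Hin x Hx) => m Hm Hxm.
  have hk : m - i1 < size R by rewrite sizeR; mlia.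
  exists (Ordinal hk) => //=.
  rewrite HR; last by mlia.
  have -> : i1 + (m - i1) = m by mlia.
  by rewrite inE Hxm Hx.
- move=> u v Hu Hv Euv.
  have [i [j [Hij Hj Hui Hvj]]] := H2 u v (in_setT u) (in_setT v) Euv.
  case: (Hin u Hu) => mu Hmu Humu; case: (Hin v Hv) => mv Hmv Hvmv.
  have := Hc1 i; have := Hc1 j; have := Hcm i j Hij => h1 h2 h3.
  exists (c i - i1), (c j - i1); split.
  + mlia.
  + rewrite sizeR; mlia.
  + rewrite HR; last by mlia.
    have -> : i1 + (c i - i1) = c i by mlia.
    rewrite inE Hu andbT; apply: (Hclamp u i mu) => //; mlia.
  + rewrite HR; last by mlia.
    have -> : i1 + (c j - i1) = c j by mlia.
    rewrite inE Hv andbT; exact: (Hclamp v j mv).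
- move=> u i j l /andP[Hil Hlj] Hj; rewrite sizeR in Hj.
  rewrite !HR; try mlia.
  rewrite !inE => /andP[Hui HuS] /andP[Huj _]; rewrite HuS andbT.
  apply: (H3 u (i1 + i) (i1 + j)) => //; mlia.
Qed.
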